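(* Fix an integer $N\ge2$ and $n,m\in\{0,\dots,N-1\}$. There exists a rational function $\widehat R_{n,m}(X)\in\mathbb{Q}(X)$, independent of $p$, with no pole at $X=-1$ nor at any primitive $2p$-th root of unity for odd $p\ge 2N+1$, such that for every odd $p\ge2N+1$ and every primitive $2p$-th root of unity $A$, with $c=\frac{p-1}{2}-N$: (i) $R^{(c)}_{n,m}=\widehat R_{n,m}(A)$, where $$R^{(c)}_{n,m}=\frac{\{m\}!\,\{2c+2n+1\}!!\,\{2c+n+1\}^+!}{\{n\}!\,\{2c+2m+1\}!!\,\{2c+m+1\}^+!};$$ (ii) $\widehat R_{n,m}(-1)=\dfrac{(-4)^{n-m}\,m!\,(N-1-m)!}{n!\,(N-1-n)!}$.
   Context: For a primitive $2p$-th root of unity $A$ ($p$ odd) and an integer $k$: $\{k\}=(-A)^k-(-A)^{-k}$, $\{k\}^+=(-A)^k+(-A)^{-k}$; for $k\ge1$, $\{k\}!=\{1\}\cdots\{k\}$ and $\{k\}^+!=\{1\}^+\cdots\{k\}^+$, with $\{0\}!=\{0\}^+!=1$; $\{k\}!!=\{k\}\{k-2\}\{k-4\}\cdots$ (product of the positive terms of the same parity down to $1$ or $2$). The quantity $R^{(c)}_{n,m}$ is the ratio $((Q'_n,Q'_n))/((Q'_m,Q'_m))$ of Hopf-pairing norms of the basis vectors $Q'^{(c)}_n$ of the $SO(3)$-TQFT space of the one-holed torus, but the claim concerns only the displayed formula. *)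

(* Defs.v *)
From HB Require Import structures.
From mathcomp Require Import all_boot all_order all_algebra all_field.
Set Implicit Arguments. Unset Strict Implicit. Unset Printing Implicit Defensive.
Import Order.TTheory GRing.Theory Num.Theory.
Local Open Scope ring_scope.

Definition qbr (A : algC) (k : nat) : algC := (- A) ^+ k - (- A) ^- k.
Definition qbrp (A : algC) (k : nat) : algC := (- A) ^+ k + (- A) ^- k.
Definition qfact (A : algC) (k : nat) : algC := \prod_(1 <= i < k.+1) qbr A i.
Definition qfactp (A : algC) (k : nat) : algC := \prod_(1 <= i < k.+1) qbrp A i.
Definition qdfact (A : algC) (k : nat) : algC :=
  \prod_(1 <= i < k.+1 | odd i == odd k) qbr A i.

Definition cc (N p : nat) : nat := (p.-1./2 - N)%N.

Definition Rc (N n m p : nat) (A : algC) : algC :=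
  let c := cc N p in
  (qfact A m * qdfact A (2 * c + 2 * n + 1) * qfactp A (2 * c + n + 1)) /
  (qfact A n * qdfact A (2 * c + 2 * m + 1) * qfactp A (2 * c + m + 1)).

(* Main.v *)
Require Import Defs.
From HB Require Import structures.
From mathcomp Require Import all_boot all_order all_algebra all_field.
From mathcomp Require Import zify ring lra.
Import Order.TTheory GRing.Theory Num.Theory.
Set Implicit Arguments. Unset Strict Implicit.
Local Open Scope ring_scope.

Lemma qdfact_SS A k : qdfact A k.+2 = qdfact A k * qbr A k.+2.
Proof.
rewrite /qdfact big_mkcond big_nat_recr // big_nat_recr //= eqxx negbK.
rewrite [in RHS]big_mkcond /=.
have -> : (odd k.+1 == odd k) = false by rewrite /=; case: (odd k).
by rewrite mulr1.
Qed.

Lemma qdfact_shift A s n :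
  qdfact A (s + 2 * n) = qdfact A s * \prod_(1 <= k < n.+1) qbr A (s + 2 * k).
Proof.
elim: n => [|n IH]; first by rewrite big_geq // mulr1 muln0 addn0.
rewrite [in RHS]big_nat_recr //=.
have -> : (s + 2 * n.+1 = (s + 2 * n).+2)%N by lia.
by rewrite qdfact_SS IH mulrA.
Qed.

Lemma qfactp_S A k : qfactp A k.+1 = qfactp A k * qbrp A k.+1.
Proof. by rewrite /qfactp big_nat_recr. Qed.

Lemma qfact_S A k : qfact A k.+1 = qfact A k * qbr A k.+1.
Proof. by rewrite /qfact big_nat_recr. Qed.

Lemma qfactp_shift A s n :
  qfactp A (s + n) = qfactp A s * \prod_(1 <= k < n.+1) qbrp A (s + k).
Proof.
elim: n => [|n IH]; first by rewrite big_geq // mulr1 addn0.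
by rewrite addnS qfactp_S IH [in RHS]big_nat_recr //= mulrA addnS.
Qed.

Definition SA (A : algC) j := \sum_(i < j) A ^+ (2 * i).

Lemma A_neq0 {p : nat} {A : algC} : (0 < p)%N -> (2 * p)%N.-primitive_root A -> A != 0.
Proof.
move=> p0 hA; apply/eqP => A0.
have := prim_expr_order hA; rewrite A0 expr0n.
have -> : (2 * p == 0)%N = false by lia.
by move/eqP; rewrite eq_sym oner_eq0.
Qed.

Lemma Ap_eq {p : nat} {A : algC} : (0 < p)%N -> (2 * p)%N.-primitive_root A -> A ^+ p = -1.
Proof.
move=> p0 hA.
have h1 : (A ^+ p - 1) * (A ^+ p + 1) = 0.
  rewrite -subr_sqr -exprM mulnC (prim_expr_order hA); ring.
have h2 : A ^+ p != 1.
  rewrite -(prim_order_dvd hA); apply/negP => /dvdn_leq; lia.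
move/eqP: h1; rewrite mulf_eq0 subr_eq0 (negbTE h2) /= addr_eq0.
by move/eqP.
Qed.

Lemma xp_eq p (A : algC) : odd p -> (2 * p)%N.-primitive_root A -> (- A) ^+ p = 1.
Proof.
move=> hp hA; have p0 : (0 < p)%N by case: p hp hA.
by rewrite exprNn -signr_odd hp (Ap_eq p0 hA) expr1 mulrNN mulr1.
Qed.

Lemma A2j (A : algC) j : (- A) ^+ j * (- A) ^+ j = A ^+ (2 * j).
Proof. by rewrite -expr2 -exprM mulnC exprM sqrrN -exprM. Qed.

Lemma qbr_mul (A : algC) j : A != 0 -> qbr A j * (- A) ^+ j = A ^+ (2 * j) - 1.
Proof.
move=> A0; have x0 : (- A) ^+ j != 0 by rewrite expf_neq0 // oppr_eq0.
by rewrite /qbr mulrBl mulVf // A2j.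
Qed.

Lemma qbrp_mul (A : algC) j : A != 0 -> qbrp A j * (- A) ^+ j = A ^+ (2 * j) + 1.
Proof.
move=> A0; have x0 : (- A) ^+ j != 0 by rewrite expf_neq0 // oppr_eq0.
by rewrite /qbrp mulrDl mulVf // A2j.
Qed.

Lemma SA_mul (A : algC) j : (A ^+ 2 - 1) * SA A j = A ^+ (2 * j) - 1.
Proof.
rewrite /SA exprM [in RHS]subrX1; congr (_ * _); apply: eq_bigr => i _.
by rewrite exprM.
Qed.

Lemma A2j_neq1 p (A : algC) j : (2 * p)%N.-primitive_root A -> (0 < j < p)%N ->
  A ^+ (2 * j) != 1.
Proof.
move=> hA hj; rewrite -(prim_order_dvd hA) dvdn_pmul2l //.
by apply/negP => /dvdn_leq; lia.
Qed.

Lemma qbr_neq0 p (A : algC) j : (2 * p)%N.-primitive_root A -> (0 < j < p)%N ->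
  qbr A j != 0.
Proof.
move=> hA hj; have A0 : A != 0 by apply: (A_neq0 _ hA); lia.
apply/eqP => h; have := qbr_mul j A0; rewrite h mul0r => /eqP.
by rewrite eq_sym subr_eq0 (negbTE (A2j_neq1 hA hj)).
Qed.

Lemma SA_neq0 p (A : algC) j : (2 * p)%N.-primitive_root A -> (0 < j < p)%N ->
  SA A j != 0.
Proof.
move=> hA hj; apply/eqP => h; have := SA_mul A j; rewrite h mulr0 => /eqP.
by rewrite eq_sym subr_eq0 (negbTE (A2j_neq1 hA hj)).
Qed.

Lemma A2_neq1 p (A : algC) : (2 * p)%N.-primitive_root A -> (1 < p)%N -> A ^+ 2 - 1 != 0.
Proof.
move=> hA hp; rewrite subr_eq0; have := A2j_neq1 (j := 1) hA.
by rewrite muln1; apply; lia.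
Qed.

Lemma A2jp1_neq0 p (A : algC) j : odd p -> (2 * p)%N.-primitive_root A ->
  A ^+ (2 * j) + 1 != 0.
Proof.
move=> hp hA; apply/eqP => h.
have h1 : A ^+ (2 * j) = -1 by apply/eqP; rewrite -addr_eq0 h.
have h4 : A ^+ (2 * (2 * j)) = 1.
  by rewrite mulnC exprM h1 sqrrN expr1n.
move: h4 => /eqP; rewrite -(prim_order_dvd hA) dvdn_pmul2l //.
rewrite Gauss_dvdr; last by rewrite coprimen2.
case/dvdnP => t jt.
have : (- A) ^+ (2 * j) = 1 by rewrite jt mulnA mulnC exprM (xp_eq hp hA) expr1n.
rewrite exprM sqrrN -exprM h1 => /eqP.
by rewrite eq_sym -addr_eq0 -mulr2n pnatr_eq0.
Qed.

Lemma xrefl p (A : algC) j : odd p -> (2 * p)%N.-primitive_root A -> (j <= p)%N ->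
  (- A) ^+ (p - j) = ((- A) ^+ j)^-1.
Proof.
move=> hp hA hj; have p0 : (0 < p)%N by case: p hp hA {hj}.
have x0 : (- A) ^+ j != 0 by rewrite expf_neq0 // oppr_eq0 (A_neq0 p0 hA).
have h : (- A) ^+ (p - j) * (- A) ^+ j = 1 by rewrite -exprD subnK // (xp_eq hp hA).
by rewrite -[LHS]mulr1 -(divff x0) mulrA h mul1r.
Qed.

Lemma qbr_refl p (A : algC) j : odd p -> (2 * p)%N.-primitive_root A -> (j <= p)%N ->
  qbr A (p - j) = - qbr A j.
Proof. by move=> hp hA hj; rewrite /qbr (xrefl hp hA hj) invrK opprB. Qed.

Lemma qbrp_refl p (A : algC) j : odd p -> (2 * p)%N.-primitive_root A -> (j <= p)%N ->
  qbrp A (p - j) = qbrp A j.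
Proof. by move=> hp hA hj; rewrite /qbrp (xrefl hp hA hj) invrK addrC. Qed.

Lemma factor_id p (A : algC) N k : odd p -> (2 * p)%N.-primitive_root A ->
  (2 * N < p)%N -> (0 < k < N)%N ->
  - qbr A (2 * N - 2 * k) * qbrp A (2 * N - k) / qbr A k =
  - (SA A (2 * N - 2 * k) * (A ^+ (2 * (2 * N - k)) + 1)) /
    (A ^+ (2 * (2 * N - 2 * k)) * SA A k).
Proof.
move=> hp hA hNp hk; have p0 : (0 < p)%N by case: p hp hA {hNp}.
have A0 := A_neq0 p0 hA.
set a := (2 * N - 2 * k)%N; set l := (2 * N - k)%N.
have xn0 : forall i, (- A) ^+ i != 0 by move=> i; rewrite expf_neq0 // oppr_eq0.
have e1 : forall i, qbr A i = (A ^+ 2 - 1) * SA A i / (- A) ^+ i.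
  by move=> i; rewrite SA_mul -(qbr_mul i A0) mulfK.
have e2 : qbrp A l = (A ^+ (2 * l) + 1) / (- A) ^+ l.
  by rewrite -(qbrp_mul l A0) mulfK.
have el : (- A) ^+ l = (- A) ^+ k * (- A) ^+ a by rewrite -exprD; congr (_ ^+ _); lia.
rewrite e1 e2 e1 el -(A2j A a).
have h1 := A2_neq1 hA (ltac:(lia) : (1 < p)%N).
have h2 : SA A k != 0 by apply: (SA_neq0 hA); lia.
move: (xn0 a) (xn0 k) h1 h2.
move: ((- A) ^+ a) ((- A) ^+ k) (A ^+ 2 - 1) (SA A k) (SA A a) (A ^+ (2 * l)).
move=> xa xk u sk sa w ha hk' hu hs.
by field; rewrite ha hk' hu hs.
Qed.

Definition Sp (j : nat) : {poly rat} := \sum_(i < j) 'X^(2 * i).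
Definition numk (N k : nat) : {poly rat} :=
  - (Sp (2 * N - 2 * k) * ('X^(2 * (2 * N - k)) + 1)).
Definition denk (N k : nat) : {poly rat} := 'X^(2 * (2 * N - 2 * k)) * Sp k.
Definition Up N n := \prod_(1 <= k < n.+1) numk N k.
Definition Vp N n := \prod_(1 <= k < n.+1) denk N k.

Notation mp := (map_poly (ratr : rat -> algC)).

Lemma Sp_A j (A : algC) : (mp (Sp j)).[A] = SA A j.
Proof.
rewrite /Sp rmorph_sum horner_sum; apply: eq_bigr => i _.
rewrite rmorphXn /= map_polyX hornerXn //.
Qed.

Lemma numk_A N k (A : algC) : (mp (numk N k)).[A] =
  - (SA A (2 * N - 2 * k) * (A ^+ (2 * (2 * N - k)) + 1)).
Proof.
rewrite /numk rmorphN rmorphM rmorphD rmorph1 rmorphXn /= map_polyX hornerN hornerM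
  Sp_A hornerD hornerXn hornerC.
done.
Qed.

Lemma denk_A N k (A : algC) : (mp (denk N k)).[A] =
  A ^+ (2 * (2 * N - 2 * k)) * SA A k.
Proof. by rewrite /denk rmorphM rmorphXn /= map_polyX hornerM hornerXn Sp_A. Qed.

Lemma Up_A N n (A : algC) : (mp (Up N n)).[A] = \prod_(1 <= k < n.+1) (mp (numk N k)).[A].
Proof. by rewrite /Up rmorph_prod horner_prod. Qed.

Lemma Vp_A N n (A : algC) : (mp (Vp N n)).[A] = \prod_(1 <= k < n.+1) (mp (denk N k)).[A].
Proof. by rewrite /Vp rmorph_prod horner_prod. Qed.

Lemma m1e (R : pzRingType) i : (-1 : R) ^+ (2 * i) = 1.
Proof. by rewrite exprM sqrrN expr1n expr1n. Qed.

Lemma Sp_m1 j : (Sp j).[-1] = j%:R.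
Proof.
rewrite /Sp horner_sum (eq_bigr (fun _ => 1)); last first.
  by move=> i _; rewrite hornerXn exprM sqrrN [1 ^+ 2]expr1n expr1n.
elim: j => [|j IH]; first by rewrite big_ord0.
by rewrite big_ord_recr /= IH -natr1.
Qed.

Lemma numk_m1 N k : (numk N k).[-1] = - ((2 * N - 2 * k)%:R * 2).
Proof.
rewrite /numk hornerN hornerM Sp_m1 hornerD hornerXn hornerC.
by rewrite !m1e.
Qed.

Lemma denk_m1 N k : (denk N k).[-1] = k%:R.
Proof. by rewrite /denk hornerM hornerXn Sp_m1 m1e mul1r. Qed.

Lemma Vp_m1 N n : (Vp N n).[-1] = n`!%:R.
Proof.
elim: n => [|n IH]; first by rewrite /Vp big_geq // hornerE.
by rewrite /Vp big_nat_recr //= -/(Vp N n) hornerM IH denk_m1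
  factS natrM mulrC.
Qed.

Lemma Up_m1 N n : (n < N)%N ->
  (Up N n).[-1] * (N - 1 - n)`!%:R = (-4) ^+ n * (N - 1)`!%:R.
Proof.
elim: n => [|n IH] hn; first by rewrite /Up big_geq // hornerE mul1r expr0 mul1r subn0.
have IH' := IH (ltnW hn).
set r := (N - 1 - n.+1)%N.
have e1 : (N - 1 - n = r.+1)%N by rewrite /r; lia.
have e2 : (2 * N - 2 * n.+1 = 2 * r.+1)%N by rewrite /r; lia.
rewrite e1 factS natrM in IH'.
rewrite /Up big_nat_recr //= -/(Up N n) hornerM numk_m1 e2 natrM exprS -[RHS]mulrA -IH'.
ring.
Qed.

Lemma alg_id (F : fieldType) (D E qm qn Xn Yn Xm Ym : F) : D != 0 -> E != 0 ->
  qm * (D * Xn) * (E * Yn) / (qn * (D * Xm) * (E * Ym)) =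
  (Xn * Yn / qn) / (Xm * Ym / qm).
Proof.
move=> hD hE; rewrite !invfM !invrK.
transitivity ((D / D) * (E / E) * (qm * Xn * Yn * qn^-1 * Xm^-1 * Ym^-1)).
  by ring.
by rewrite !divff // !mul1r; ring.
Qed.

Lemma alg_id2 (F : fieldType) (a b c d : F) : (a * b) / (c * d) = (a / c) / (d / b).
Proof. by rewrite !invfM invrK; ring. Qed.

Lemma qbrp_neq0 p (A : algC) j : odd p -> (2 * p)%N.-primitive_root A -> qbrp A j != 0.
Proof.
move=> hp hA; have p0 : (0 < p)%N by case: p hp hA.
apply/eqP => h; have := qbrp_mul j (A_neq0 p0 hA); rewrite h mul0r => /eqP.
by rewrite eq_sym (negbTE (A2jp1_neq0 j hp hA)).
Qed.

Theorem lemma1 (N n m : nat) (hN : (2 <= N)%N) (hn : (n < N)%N) (hm : (m < N)%N) :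
  exists P Q : {poly rat},
    Q.[-1] != 0 /\
    (forall (p : nat) (A : algC), odd p -> (2 * N + 1 <= p)%N ->
        (2 * p)%N.-primitive_root A -> (map_poly ratr Q).[A] != 0) /\
    (forall (p : nat) (A : algC), odd p -> (2 * N + 1 <= p)%N ->
        (2 * p)%N.-primitive_root A ->
        Rc N n m p A = (map_poly ratr P).[A] / (map_poly ratr Q).[A]) /\
    P.[-1] / Q.[-1] =
      (-4 : rat) ^ (n%:Z - m%:Z) * ((m`! * (N - 1 - m)`!)%N)%:R
        / ((n`! * (N - 1 - n)`!)%N)%:R.
Proof.
exists (Up N n * Vp N m), (Vp N n * Up N m).
have hUn := Up_m1 hn; have hUm := Up_m1 hm.
have fn0 : forall k, (k`!%:R : rat) != 0 by move=> k; rewrite pnatr_eq0 -lt0n fact_gt0.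
have c4 : forall k, ((-4 : rat) ^+ k) != 0 by move=> k; rewrite expf_neq0.
have Um0 : (Up N m).[-1] != 0.
  apply/eqP => h; have : ((-4 : rat) ^+ m * (N - 1)`!%:R != 0) by rewrite mulf_neq0.
  by rewrite -hUm h mul0r eqxx.
have Un0 : (Up N n).[-1] != 0.
  apply/eqP => h; have : ((-4 : rat) ^+ n * (N - 1)`!%:R != 0) by rewrite mulf_neq0.
  by rewrite -hUn h mul0r eqxx.
split; first by rewrite hornerM Vp_m1 mulf_neq0.
split.
  move=> p A hp hpN hA; have p0 : (0 < p)%N by lia.
  have A0 := A_neq0 p0 hA.
  rewrite rmorphM hornerM Vp_A Up_A mulf_neq0 //.
    rewrite prodf_seq_neq0; apply/allP => k; rewrite mem_index_iota => hk /=.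
    rewrite denk_A mulf_neq0 ?expf_neq0 //; apply: (SA_neq0 hA); lia.
  rewrite prodf_seq_neq0; apply/allP => k; rewrite mem_index_iota => hk /=.
  rewrite numk_A oppr_eq0 mulf_neq0 ?(A2jp1_neq0 _ hp hA) //; apply: (SA_neq0 hA); lia.
split.
  move=> p A hp hpN hA; have p0 : (0 < p)%N by lia.
  set s := (p - 2 * N)%N.
  rewrite /Rc /=.
  have -> : (2 * cc N p + 2 * n + 1 = s + 2 * n)%N by rewrite /cc /s; lia.
  have -> : (2 * cc N p + 2 * m + 1 = s + 2 * m)%N by rewrite /cc /s; lia.
  have -> : (2 * cc N p + n + 1 = s + n)%N by rewrite /cc /s; lia.
  have -> : (2 * cc N p + m + 1 = s + m)%N by rewrite /cc /s; lia.
  rewrite !qdfact_shift !qfactp_shift.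
  have Xe : forall j, (j < N)%N -> \prod_(1 <= k < j.+1) qbr A (s + 2 * k) =
      \prod_(1 <= k < j.+1) - qbr A (2 * N - 2 * k).
    move=> j hj; apply: eq_big_nat => k hk.
    have -> : (s + 2 * k = p - (2 * N - 2 * k))%N by rewrite /s; lia.
    by rewrite (qbr_refl hp hA) //; lia.
  have Ye : forall j, (j < N)%N -> \prod_(1 <= k < j.+1) qbrp A (s + k) =
      \prod_(1 <= k < j.+1) qbrp A (2 * N - k).
    move=> j hj; apply: eq_big_nat => k hk.
    have -> : (s + k = p - (2 * N - k))%N by rewrite /s; lia.
    by rewrite (qbrp_refl hp hA) //; lia.
  rewrite (Xe n hn) (Xe m hm) (Ye n hn) (Ye m hm).
  have D0 : qdfact A s != 0.
    rewrite /qdfact prodf_seq_neq0; apply/allP => i; rewrite mem_index_iota => hi.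
    apply/implyP => _; apply: (qbr_neq0 hA); rewrite /s in hi; lia.
  have E0 : qfactp A s != 0.
    rewrite /qfactp prodf_seq_neq0; apply/allP => i _.
    by apply/implyP => _; apply: (qbrp_neq0 i hp hA).
  rewrite [LHS](alg_id _ _ _ _ _ _ D0 E0).
  rewrite rmorphM [(map_poly ratr (Vp N n * Up N m))]rmorphM !hornerM [RHS]alg_id2.
  have fe : forall j, (j < N)%N ->
      \prod_(1 <= k < j.+1) - qbr A (2 * N - 2 * k) *
      \prod_(1 <= k < j.+1) qbrp A (2 * N - k) / qfact A j =
      (map_poly ratr (Up N j)).[A] / (map_poly ratr (Vp N j)).[A].
    move=> j hj; rewrite Up_A Vp_A -prodfV -big_split /qfact -prodfV -!big_split /=.
    apply: eq_big_nat => k hk.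
    rewrite numk_A denk_A -(factor_id hp hA) //; lia.
  by rewrite -(fe n hn) -(fe m hm).
rewrite !hornerM !Vp_m1.
have -> : (-4 : rat) ^ (n%:Z - m%:Z) = (-4) ^+ n / (-4) ^+ m.
  by rewrite expfzDr // exprnN -exprnP.
have eUn : (Up N n).[-1] = (-4) ^+ n * (N - 1)`!%:R / (N - 1 - n)`!%:R.
  by rewrite -hUn mulfK.
have eUm : (Up N m).[-1] = (-4) ^+ m * (N - 1)`!%:R / (N - 1 - m)`!%:R.
  by rewrite -hUm mulfK.
rewrite eUn eUm !natrM.
field.
by rewrite !fn0 !c4.
Qed.
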